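(* Let $d\geq 3$. If $G$ is a connected $d$-regular graph of girth $g\geq 3$ on $n$ vertices, then \[ \mathrm{kiss}(G) \leq \frac{n(n(d - 2)+2)}{2\log_{d-1}\left(\frac{n(d-2) + 2}{d}\right)+1} \quad\text{if } g \text{ is odd}, \] and \[ \mathrm{kiss}(G) \leq \frac{nd(n(d -2)+2)}{4\log_{d-1}\left(\frac{n(d-2) + 2}{2}\right)} \quad\text{if } g \text{ is even}, \] with equality if and only if $G$ is a Moore graph.
   Context: Graphs are finite and may have loops and multiple edges. A walk is a sequence of oriented edges, consecutive ones sharing endpoints; a closed geodesic is a closed walk (up to cyclic permutation) that never immediately backtracks along an edge, including at the base point. The girth is the smallest length of a closed geodesic. The kissing number $\mathrm{kiss}(G)$ is the number of distinct shortest oriented cycles in $G$ (oriented cycles of length equal to the girth). A Moore graph is a connected $d$-regular graph of girth $g$ whose number of vertices equals $1 + d \sum_{j=0}^{(g-3)/2} (d-1)^j$ if $g$ is odd and $2 \sum_{j=0}^{(g-2)/2} (d-1)^j$ if $g$ is even. *)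

(* Defs.v *)
From Stdlib Require Import Reals.
From mathcomp Require Import all_boot.
Set Implicit Arguments. Unset Strict Implicit. Unset Printing Implicit Defensive.

(* A graph (loops / multiple edges allowed), Serre-style:
   V vertices, D darts (oriented edges), src : D -> V the origin map,
   inv : D -> D the orientation reversal, a fixed-point-free involution. *)
Definition is_graph (V D : finType) (src : D -> V) (inv : D -> D) : Prop :=
  involutive inv /\ (forall e, inv e != e).

Section G.
Variables (V D : finType) (src : D -> V) (inv : D -> D).

Definition tgt (e : D) : V := src (inv e).

(* degree = number of darts leaving v (a loop contributes 2) *)
Definition regular (d : nat) : Prop := forall v : V, #|[set e | src e == v]| = d.

Definition adj : rel V := fun u v => [exists e, (src e == u) && (tgt e == v)].

Definition connected : Prop := forall u v : V, connect adj u v.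

(* closed geodesic (given by a base point): nonempty closed walk e_1..e_k with
   tgt e_i = src e_{i+1} and e_{i+1} <> inv e_i, indices mod k (so also no
   backtracking at the base point). *)
Definition cgeod (s : seq D) : bool :=
  (0 < size s) &&
  all (fun p : D * D => (tgt p.1 == src p.2) && (p.2 != inv p.1)) (zip s (rot 1 s)).

Definition is_girth (g : nat) : Prop :=
  (exists s, cgeod s /\ size s = g) /\ (forall s, cgeod s -> g <= size s).

(* closed geodesics of length g, up to cyclic permutation *)
Definition rot_class (g : nat) (t : g.-tuple D) : {set g.-tuple D} :=
  [set t' : g.-tuple D | [exists i : 'I_g, val t' == rot i (val t)]].

Definition kiss_at (g : nat) : nat :=
  #|[set rot_class t | t in [set t : g.-tuple D | cgeod t]]|.

Definition moore_count (d g : nat) : nat :=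
  if odd g then 1 + d * \sum_(j < (g - 1)./2) (d - 1) ^ j
  else 2 * \sum_(j < g./2) (d - 1) ^ j.

Definition is_moore : Prop :=
  exists d g, [/\ connected, regular d, is_girth g & #|V| = moore_count d g].

End G.

Local Open Scope R_scope.
Definition logb (b x : R) : R := (ln x / ln b)%R.

Definition bound_odd (n d : nat) : R :=
  (INR n * (INR n * (INR d - 2) + 2) /
   (2 * logb (INR d - 1) ((INR n * (INR d - 2) + 2) / INR d) + 1))%R.

Definition bound_even (n d : nat) : R :=
  (INR n * INR d * (INR n * (INR d - 2) + 2) /
   (4 * logb (INR d - 1) ((INR n * (INR d - 2) + 2) / 2)))%R.

(* Main.v *)
Require Import Defs.
From Stdlib Require Import Reals Lra Lia.

Open Scope R_scope.

Lemma ln2_gt : 2/3 < ln 2.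
Proof.
assert (H1 : 1 + (-1/18) <= exp (-1/18)) by apply exp_ineq1_le.
assert (H2 : exp (1/18) * exp (-1/18) = 1).
{ rewrite <- exp_plus. replace (1/18 + -1/18) with 0 by field. apply exp_0. }
assert (Hp : 0 < exp (1/18)) by apply exp_pos.
assert (H3 : exp (1/18) <= 18/17).
{ nra. }
assert (H4 : exp (2/3) = exp (1/18) ^ 12).
{ rewrite <- (exp_ln (exp (1/18) ^ 12)) by (apply pow_lt; lra).
  rewrite ln_pow by lra. rewrite ln_exp. f_equal. simpl. field. }
assert (H5 : exp (1/18) ^ 12 <= (18/17)^12).
{ apply pow_incr. lra. }
assert (H6 : (18/17)^12 < 2) by (simpl; lra).
assert (H7 : exp (2/3) < exp (ln 2)) by (rewrite exp_ln by lra; lra).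
destruct (Rlt_or_le (2/3) (ln 2)) as [H|H]; auto.
exfalso. assert (exp (ln 2) <= exp (2/3)).
{ destruct H as [H|H]. left; apply exp_increasing; auto. rewrite H; lra. }
lra.
Qed.


Lemma exp_bound (r alpha delta : R) : 1 <= r -> 0 < alpha -> delta = ln r / alpha ->
  0 <= delta /\ 1 + delta * alpha <= r /\ (1 < r -> 0 < delta /\ 1 + delta * alpha < r).
Proof.
intros Hr Ha Hd.
assert (E : delta * alpha = ln r) by (subst; field; lra).
assert (Hl : 0 <= ln r).
{ destruct Hr as [Hr|Hr]. left; rewrite <- ln_1; apply ln_increasing; lra. rewrite <- Hr, ln_1; lra. }
assert (Er : exp (ln r) = r) by (apply exp_ln; lra).
split; [|split].
- subst. apply Rmult_le_pos; [lra| left; apply Rinv_0_lt_compat; lra].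
- rewrite E. rewrite <- Er at 2. apply exp_ineq1_le.
- intros H1. assert (Hl2 : 0 < ln r) by (rewrite <- ln_1; apply ln_increasing; lra).
  split.
  + subst. apply Rmult_lt_0_compat; [lra| apply Rinv_0_lt_compat; lra].
  + rewrite E. rewrite <- Er at 2. apply exp_ineq1. lra.
Qed.

Lemma logb_split (a X X0 c : R) (k : nat) : 2 <= a -> 0 < c -> 0 < X0 -> 0 < X ->
  X0 = c * a ^ k ->
  logb a (X / c) = INR k + ln (X / X0) / ln a.
Proof.
intros Ha Hc H0 HX E.
assert (Hla : 0 < ln a) by (rewrite <- ln_1; apply ln_increasing; lra).
assert (Hak : 0 < a ^ k) by (apply pow_lt; lra).
unfold logb.
replace (X / c) with ((X / X0) * a ^ k) by (rewrite E; field; lra).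
rewrite ln_mult; [|apply Rdiv_lt_0_compat; lra| exact Hak].
rewrite ln_pow by lra. field. lra.
Qed.

Lemma div_le (a b c : R) : 0 < c -> a * c <= b -> a <= b / c.
Proof. intros Hc H. apply (Rmult_le_reg_r c); auto. unfold Rdiv. rewrite Rmult_assoc, Rinv_l by lra. lra. Qed.

Lemma div_lt (a b c : R) : 0 < c -> a * c < b -> a < b / c.
Proof. intros Hc H. apply (Rmult_lt_reg_r c); auto. unfold Rdiv. rewrite Rmult_assoc, Rinv_l by lra. lra. Qed.

Lemma real_gen (n K X0 X q den : R) : 0 < q -> 0 < den -> 0 < X0 -> 0 <= n ->
  K * q <= n * X0 -> X0 * den <= X * q -> K <= n * X / den.
Proof.
intros Hq Hd H0 Hn H1 H2. apply div_le; auto.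
assert (K <= n * X0 / q) by (apply div_le; auto).
apply Rle_trans with (n * X0 / q * den). apply Rmult_le_compat_r; lra.
unfold Rdiv. replace (n * X0 * / q * den) with (n * (X0 * den) * / q) by ring.
apply Rle_trans with (n * (X * q) * / q).
apply Rmult_le_compat_r. left; apply Rinv_0_lt_compat; auto. apply Rmult_le_compat_l; auto.
right. field. lra.
Qed.

Lemma real_gen_lt (n K X0 X q den : R) : 0 < q -> 0 < den -> 0 < X0 -> 0 < n ->
  K * q <= n * X0 -> X0 * den < X * q -> K < n * X / den.
Proof.
intros Hq Hd H0 Hn H1 H2. apply div_lt; auto.
assert (K <= n * X0 / q) by (apply div_le; auto).
apply Rle_lt_trans with (n * X0 / q * den). apply Rmult_le_compat_r; lra.
unfold Rdiv. replace (n * X0 * / q * den) with (n * (X0 * den) * / q) by ring.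
apply Rlt_le_trans with (n * (X * q) * / q).
apply Rmult_lt_compat_r. apply Rinv_0_lt_compat; auto. apply Rmult_lt_compat_l; auto.
right. field. lra.
Qed.

Lemma real_odd (n d K M : R) (k : nat) : 3 <= d -> (1 <= k)%nat -> 0 < n -> 0 <= K ->
  M <= n -> M * (d - 2) + 2 = d * (d - 1) ^ k ->
  K * (2 * INR k + 1) <= n * d * (d - 1) ^ k ->
  (n = M -> K * (2 * INR k + 1) = n * d * (d - 1) ^ k) ->
  K <= n * (n * (d - 2) + 2) / (2 * logb (d - 1) ((n * (d - 2) + 2) / d) + 1) /\
  (K = n * (n * (d - 2) + 2) / (2 * logb (d - 1) ((n * (d - 2) + 2) / d) + 1) <-> n = M).
Proof.
intros Hd Hk Hn HK HM HX0 H1 H2.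
set (X := n * (d - 2) + 2). set (X0 := d * (d - 1) ^ k).
assert (Hak : 0 < (d - 1) ^ k) by (apply pow_lt; lra).
assert (HX0p : 0 < X0) by (unfold X0; apply Rmult_lt_0_compat; lra).
assert (HXX : X - X0 = (n - M) * (d - 2)) by (unfold X, X0; rewrite <- HX0; ring).
assert (HXge : X0 <= X) by nra.
assert (HXp : 0 < X) by lra.
set (r := X / X0).
assert (Hr : 1 <= r) by (unfold r; apply div_le; lra).
assert (HrX : X = r * X0) by (unfold r; field; lra).
set (al := ln (d - 1)).
assert (Hal : 2/3 < al).
{ apply Rlt_le_trans with (ln 2). apply ln2_gt. unfold al.
  destruct (Req_dec (d - 1) 2) as [E|E]. rewrite E; lra. left; apply ln_increasing; lra. }
set (de := ln r / al).
destruct (exp_bound r al de Hr) as [Hde [Hde2 Hde3]]; try lra; auto.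
assert (HL : logb (d - 1) (X / d) = INR k + de).
{ unfold de, r, al. apply logb_split; try lra. reflexivity. }
rewrite HL.
assert (HkR : 1 <= INR k) by (replace 1 with (INR 1) by reflexivity; apply le_INR; lia).
assert (Hq : 0 < 2 * INR k + 1) by lra.
assert (Hden : 0 < 2 * (INR k + de) + 1) by lra.
assert (H1' : K * (2 * INR k + 1) <= n * X0) by (unfold X0; lra).
assert (Hkey : X0 * (2 * (INR k + de) + 1) <= X * (2 * INR k + 1)).
{ clearbody r de al X X0. rewrite HrX.
  assert (A1 : 0 <= (r - (1 + de * al)) * (2 * INR k + 1)) by (apply Rmult_le_pos; lra).
  assert (A2 : 0 <= de * (al - 2/3) * (2 * INR k + 1)) by (apply Rmult_le_pos; [apply Rmult_le_pos|]; lra).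
  assert (A3 : 0 <= de * (INR k - 1)) by (apply Rmult_le_pos; lra).
  assert (r * (2 * INR k + 1) >= 2 * (INR k + de) + 1) by lra.
  assert (0 <= X0 * (r * (2 * INR k + 1) - (2 * (INR k + de) + 1))) by (apply Rmult_le_pos; lra).
  nra. }
split.
- apply (real_gen n K X0 X (2 * INR k + 1)); auto; lra.
- split.
  + intros E. destruct (Rle_lt_or_eq_dec M n HM) as [Hlt|Heq]; auto.
    exfalso. assert (Hr1 : 1 < r).
    { assert (0 < (n - M) * (d - 2)) by (apply Rmult_lt_0_compat; lra). unfold r. apply div_lt; lra. }
    destruct (Hde3 Hr1) as [Hd1 Hd2].
    assert (Hkey2 : X0 * (2 * (INR k + de) + 1) < X * (2 * INR k + 1)).
    { clearbody r de al X X0. rewrite HrX.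
      assert (A1 : 0 < (r - (1 + de * al)) * (2 * INR k + 1)) by (apply Rmult_lt_0_compat; lra).
      assert (A2 : 0 <= de * (al - 2/3) * (2 * INR k + 1)) by (apply Rmult_le_pos; [apply Rmult_le_pos|]; lra).
      assert (A3 : 0 <= de * (INR k - 1)) by (apply Rmult_le_pos; lra).
      assert (r * (2 * INR k + 1) > 2 * (INR k + de) + 1) by lra.
      assert (0 < X0 * (r * (2 * INR k + 1) - (2 * (INR k + de) + 1))) by (apply Rmult_lt_0_compat; lra).
      nra. }
    assert (K < n * X / (2 * (INR k + de) + 1)).
    { apply (real_gen_lt n K X0 X (2 * INR k + 1)); auto. }
    lra.
  + intros E. assert (HXe : X = X0) by (rewrite E in HXX; nra).
    assert (Hr1 : r = 1) by (unfold r; rewrite HXe; field; lra).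
    assert (Hde0 : de = 0) by (unfold de; rewrite Hr1, ln_1; field; lra).
    rewrite Hde0, Rplus_0_r.
    apply (Rmult_eq_reg_r (2 * INR k + 1)); [| lra].
    unfold Rdiv; rewrite Rmult_assoc, Rinv_l by lra; rewrite Rmult_1_r.
    rewrite (H2 E), HXe; unfold X0; ring.
Qed.

Lemma real_even (n d K M : R) (m : nat) : 3 <= d -> (2 <= m)%nat -> 0 < n -> 0 <= K ->
  M <= n -> M * (d - 2) + 2 = 2 * (d - 1) ^ m ->
  K * (2 * INR m) <= n * d * (d - 1) ^ m ->
  (n = M -> K * (2 * INR m) = n * d * (d - 1) ^ m) ->
  K <= n * d * (n * (d - 2) + 2) / (4 * logb (d - 1) ((n * (d - 2) + 2) / 2)) /\
  (K = n * d * (n * (d - 2) + 2) / (4 * logb (d - 1) ((n * (d - 2) + 2) / 2)) <-> n = M).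
Proof.
intros Hd Hk Hn HK HM HX0 H1 H2.
set (X := n * (d - 2) + 2). set (X0 := 2 * (d - 1) ^ m).
assert (Hak : 0 < (d - 1) ^ m) by (apply pow_lt; lra).
assert (HX0p : 0 < X0) by (unfold X0; apply Rmult_lt_0_compat; lra).
assert (HXX : X - X0 = (n - M) * (d - 2)) by (unfold X, X0; rewrite <- HX0; ring).
assert (HXge : X0 <= X) by nra.
assert (HXp : 0 < X) by lra.
set (r := X / X0).
assert (Hr : 1 <= r) by (unfold r; apply div_le; lra).
assert (HrX : X = r * X0) by (unfold r; field; lra).
set (al := ln (d - 1)).
assert (Hal : 2/3 < al).
{ apply Rlt_le_trans with (ln 2). apply ln2_gt. unfold al.
  destruct (Req_dec (d - 1) 2) as [E|E]. rewrite E; lra. left; apply ln_increasing; lra. }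
set (de := ln r / al).
destruct (exp_bound r al de Hr) as [Hde [Hde2 Hde3]]; try lra; auto.
assert (HL : logb (d - 1) (X / 2) = INR m + de).
{ unfold de, r, al. apply logb_split; try lra. reflexivity. }
rewrite HL.
assert (HkR : 2 <= INR m) by (replace 2 with (INR 2) by reflexivity; apply le_INR; lia).
assert (Hq : 0 < 4 * INR m) by lra.
assert (Hden : 0 < 4 * (INR m + de)) by lra.
assert (H1' : K * (4 * INR m) <= n * d * X0) by (unfold X0; lra).
assert (Hnd : 0 < n * d) by (apply Rmult_lt_0_compat; lra).
assert (Hkey : X0 * (4 * (INR m + de)) <= X * (4 * INR m)).
{ clearbody r de al X X0. rewrite HrX.
  assert (A1 : 0 <= (r - (1 + de * al)) * INR m) by (apply Rmult_le_pos; lra).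
  assert (A2 : 0 <= de * (al - 2/3) * INR m) by (apply Rmult_le_pos; [apply Rmult_le_pos|]; lra).
  assert (A3 : 0 <= de * (INR m - 2)) by (apply Rmult_le_pos; lra).
  assert (r * INR m >= INR m + de) by lra.
  assert (0 <= X0 * (r * INR m - (INR m + de))) by (apply Rmult_le_pos; lra).
  nra. }
replace (n * d * X) with ((n * d) * X) by ring.
split.
- apply (real_gen (n * d) K X0 X (4 * INR m)); auto; lra.
- split.
  + intros E. destruct (Rle_lt_or_eq_dec M n HM) as [Hlt|Heq]; auto.
    exfalso. assert (Hr1 : 1 < r).
    { assert (0 < (n - M) * (d - 2)) by (apply Rmult_lt_0_compat; lra). unfold r. apply div_lt; lra. }
    destruct (Hde3 Hr1) as [Hd1 Hd2].
    assert (Hkey2 : X0 * (4 * (INR m + de)) < X * (4 * INR m)).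
    { clearbody r de al X X0. rewrite HrX.
      assert (A1 : 0 < (r - (1 + de * al)) * INR m) by (apply Rmult_lt_0_compat; lra).
      assert (A2 : 0 <= de * (al - 2/3) * INR m) by (apply Rmult_le_pos; [apply Rmult_le_pos|]; lra).
      assert (A3 : 0 <= de * (INR m - 2)) by (apply Rmult_le_pos; lra).
      assert (r * INR m > INR m + de) by lra.
      assert (0 < X0 * (r * INR m - (INR m + de))) by (apply Rmult_lt_0_compat; lra).
      nra. }
    assert (K < n * d * X / (4 * (INR m + de))).
    { apply (real_gen_lt (n * d) K X0 X (4 * INR m)); auto. }
    lra.
  + intros E. assert (HXe : X = X0) by (rewrite E in HXX; nra).
    assert (Hr1 : r = 1) by (unfold r; rewrite HXe; field; lra).
    assert (Hde0 : de = 0) by (unfold de; rewrite Hr1, ln_1; field; lra).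
    rewrite Hde0, Rplus_0_r.
    apply (Rmult_eq_reg_r (4 * INR m)); [| lra].
    unfold Rdiv; rewrite Rmult_assoc, Rinv_l by lra; rewrite Rmult_1_r.
    replace (K * (4 * INR m)) with (2 * (K * (2 * INR m))) by ring.
    rewrite (H2 E), HXe; unfold X0; ring.
Qed.

Close Scope R_scope.

From mathcomp Require Import all_boot zify.
Delimit Scope R_scope with Re.
Set Implicit Arguments. Unset Strict Implicit. Unset Printing Implicit Defensive.
Section W.
Variables (V D : finType) (src : D -> V) (inv : D -> D).
Hypothesis invK : involutive inv.
Hypothesis invN : forall e, inv e != e.
Local Notation tgt := (tgt src inv).
Local Notation cgeod := (cgeod src inv).

Definition step (e f : D) := (tgt e == src f) && (f != inv e).
Definition nbw (v : V) (s : seq D) :=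
  if s is e :: s' then (src e == v) && path step e s' else true.
Definition wend (v : V) (s : seq D) := last v [seq tgt e | e <- s].
Definition rinv (s : seq D) := rev (map inv s).

Lemma inv_inj : injective inv. Proof. exact: inv_inj invK. Qed.
Lemma tgt_inv e : tgt (inv e) = src e.
Proof. by rewrite /Defs.tgt invK. Qed.

Lemma zip_rcons_all (x y : D) p :
  all (fun pr : D * D => step pr.1 pr.2) (zip (x :: p) (rcons p y)) = path step x (rcons p y).
Proof. by elim: p x => [|z p IH] x //=; rewrite IH. Qed.

Lemma cgeodE x p : cgeod (x :: p) = path step x (rcons p x).
Proof.
by rewrite /Defs.cgeod /= rot1_cons -zip_rcons_all.
Qed.

Lemma step_rev e f : step e f = step (inv f) (inv e).
Proof.
rewrite /step tgt_inv /Defs.tgt invK eq_sym; congr (_ && _).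
by rewrite eq_sym.
Qed.

Lemma path_map_inv y t : path step (inv y) (map inv t) = path (fun a b => step b a) y t.
Proof.
elim: t y => [|z t IH] y //=; rewrite IH step_rev !invK //.
Qed.

Lemma path_rinv x s : path step x s -> path step (inv (last x s)) (rinv (belast x s)).
Proof. by rewrite /rinv -map_rev path_map_inv -rev_path. Qed.

Lemma rinv_cons x s : rinv (x :: s) = inv (last x s) :: rinv (belast x s).
Proof. by rewrite lastI /rinv map_rcons rev_rcons. Qed.


Lemma wend_cons v e s : wend v (e :: s) = tgt (last e s).
Proof. by rewrite /wend /= last_map. Qed.

Lemma CR n q v : size q < n -> q != [::] -> nbw v q -> wend v q = v ->
  exists c, cgeod c /\ size c <= size q /\ (size c < size q \/ c = q).
Proof.
elim: n q v => [|n IH] q v //.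
case: q => [|e q'] // Hs _ /= /andP[/eqP He Hp]; rewrite wend_cons => Hw.
have [Ha|Ha] := eqVneq (last e q') (inv e); last first.
  exists (e :: q'); split; last by split => //; right.
  rewrite cgeodE rcons_path Hp /step Hw He eqxx /=.
  apply/eqP => H; have H2 := f_equal inv H; rewrite invK in H2.
  by rewrite H2 eqxx in Ha.
case: q' Hs Hp Ha Hw => [|y q''] Hs Hp Ha Hw.
  by move: (invN e); rewrite /= -Ha eqxx.
have El := lastI y q''; set r := belast y q'' in El; set a := last y q'' in El.
rewrite El in Hs Hp *; rewrite /= -/a in Ha Hw.
move: Hp; rewrite rcons_path => /andP[Hp Hst].
rewrite /= size_rcons in Hs *; rewrite Ha in Hst.
clearbody r a; subst a.
case: r Hs Hp Hst {El Hw} => [|z r'] Hs Hp Hst.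
  by move: Hst; rewrite /step /= eqxx andbF.
have := IH (z :: r') (tgt e); rewrite wend_cons /=.
case/andP: Hp => Hez Hp.
case => //.
- by move: Hs => /=; lia.
- by move: Hez => /andP[/eqP -> _]; rewrite eqxx.
- by move: Hst; rewrite /step /= => /andP[/eqP -> _].
move=> c [Hc [Hsz _]]; exists c; split => //.
rewrite /=; by split; [lia | left; lia].
Qed.

Lemma nbw_rcons v P a : nbw v (rcons P a) -> nbw v P /\ wend v P = src a.
Proof.
case: P => [|x P] /=; first by move/andP=> [/eqP -> _].
rewrite rcons_path => /andP[-> /andP[-> /andP[/eqP H _]]]; split => //.
by rewrite wend_cons H.
Qed.

Lemma nbw_cons v e s : nbw v (e :: s) -> nbw (tgt e) s.
Proof.
case: s => [|y s] //= /andP[_ /andP[/andP[/eqP -> _] ->]]; by rewrite eqxx.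
Qed.

Lemma last_rinv f q' : last (inv (last f q')) (rinv (belast f q')) = inv f.
Proof.
have := rinv_cons f q'; rewrite {1}/rinv /= rev_cons => E.
have := f_equal (last (inv f)) E; rewrite last_rcons /= => ->; done.
Qed.

Lemma L n p q v u : size p + size q < n -> nbw v p -> nbw v q ->
  wend v p = u -> wend v q = u -> p != q ->
  exists c, cgeod c /\ size c <= size p + size q /\
    (size c < size p + size q \/ c = p ++ rinv q \/ p = [::]).
Proof.
elim: n p q v u => [|n IH] p q v u //.
case: p => [|e p']; case: q => [|f q'] //.
- move=> _ _ Hq <- Hw Hne.
  have [c [Hc [H1 _]]] := CR (q:=f::q') (ltnSn _) isT Hq Hw.
  by exists c; split => //; split => //; right; right.
- move=> _ Hp _ Hw Hu Hne; rewrite -Hu in Hw.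
  have [c [Hc [H1 H2]]] := CR (q:=e::p') (ltnSn _) isT Hp Hw.
  exists c; split => //; split; first by rewrite addn0.
  by case: H2 => [H2|->]; [left; rewrite addn0 | right; left; rewrite cats0].
move=> Hs Hp Hq Hwp Hwq Hne.
have [Eef|Nef] := eqVneq e f.
  subst f.
  have Hne' : p' != q' by apply: contra Hne => /eqP ->.
  have [|c [Hc [H1 _]]] := IH p' q' (tgt e) u _ (nbw_cons Hp) (nbw_cons Hq) Hwp Hwq Hne'.
    by move: Hs => /=; lia.
  by exists c; split => //=; split; [lia | left; lia].
have [Eab|Nab] := eqVneq (last e p') (last f q').
  have Ep := lastI e p'; have Eq := lastI f q'.
  rewrite Ep in Hp Hs Hne; rewrite Eq in Hq Hs Hne; rewrite Eab in Hp Hne.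
  have [HP HwP] := nbw_rcons Hp; have [HQ HwQ] := nbw_rcons Hq.
  have HneP : belast e p' != belast f q' by apply: contra Hne => /eqP ->.
  have [|c [Hc [H1 _]]] := IH _ _ v _ _ HP HQ HwP HwQ HneP.
    by move: Hs; rewrite !size_rcons; lia.
  by exists c; split => //=; split; move: H1; rewrite !size_belast; lia.
exists ((e :: p') ++ rinv (f :: q')); split; last first.
  by rewrite size_cat /rinv size_rev size_map; split => //; right; left.
move: Hp Hq => /= /andP[/eqP Hev Hp] /andP[/eqP Hfv Hq].
rewrite /= cgeodE rcons_cat cat_path Hp /= rinv_cons /= rcons_path. 
rewrite path_rinv // last_rinv /step tgt_inv Hev Hfv eqxx invK Nef andbT.
move: Hwp Hwq; rewrite !wend_cons => Ha Hb.
have -> : src (inv (last f q')) = tgt (last f q') by [].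
by rewrite Ha Hb eqxx (inj_eq inv_inj) eq_sym Nab.
Qed.

Fixpoint ext (m : nat) (e : D) : seq (seq D) :=
  if m is m'.+1 then [seq f :: s | f <- enum [pred f | step e f], s <- ext m' f]
  else [:: [::]].

Definition wf (P : pred D) m := [seq f :: s | f <- enum P, s <- ext m f].

Lemma mem_ext m e s : (s \in ext m e) = (size s == m) && path step e s.
Proof.
elim: m e s => [|m IH] e s /=; first by case: s.
apply/allpairsPdep/idP.
  by case=> f [s' [Hf Hs ->]]; rewrite mem_enum inE in Hf; rewrite IH in Hs; rewrite /= eqSS Hf.
case: s => [|f s'] //= /andP[Hs /andP[Hf Hp]]; exists f, s'; split => //.
  by rewrite mem_enum inE.
by rewrite IH -eqSS Hs.
Qed.

Lemma mem_wf P m s : (s \in wf P m) =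
  if s is f :: s' then [&& P f, size s' == m & path step f s'] else false.
Proof.
apply/allpairsPdep/idP.
  case=> f [s' [Hf Hs ->]]; rewrite mem_enum in Hf; rewrite mem_ext in Hs.
  by case/andP: Hs => H1 H2; apply/and3P.
case: s => [|f s'] // /and3P[Hf Hs Hp]; exists f, s'; split => //.
  by rewrite mem_enum.
by rewrite mem_ext Hs.
Qed.

Lemma uniq_cons_pairs (l : seq D) (t : D -> seq (seq D)) :
  uniq l -> (forall x, uniq (t x)) -> uniq [seq f :: s | f <- l, s <- t f].
Proof.
move=> Ul Ut; apply: (allpairs_uniq_dep (T := fun _ => seq D)) => //.
by move=> [x a] [y b] _ _ /= [E1 E2]; subst.
Qed.

Lemma uniq_ext m e : uniq (ext m e).
Proof.
elim: m e => [|m IH] e //=; apply: uniq_cons_pairs => //; exact: enum_uniq.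
Qed.

Lemma uniq_wf P m : uniq (wf P m).
Proof. apply: uniq_cons_pairs => //; [exact: enum_uniq | exact: uniq_ext]. Qed.

Lemma size_cons_pairs (l : seq D) (t : D -> seq (seq D)) c :
  (forall x, size (t x) = c) -> size [seq f :: s | f <- l, s <- t f] = size l * c.
Proof.
move=> Ht; rewrite size_allpairs_dep; elim: l => //= x l IH; by rewrite IH Ht mulSn.
Qed.

Variable d : nat.
Hypothesis reg : regular src d.

Lemma card_step e : #|[pred f | step e f]| = d.-1.
Proof.
have := cardsD1 (inv e) [set f | src f == tgt e]; rewrite reg inE.
have -> : (src (inv e) == tgt e) = true by rewrite eqxx.
have E : forall x, (true + x).-1 = x by [].
move=> ->; rewrite E; apply: eq_card => f.
rewrite !inE /step andbC; congr (_ && _); by rewrite eq_sym.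
Qed.

Lemma size_ext m e : size (ext m e) = d.-1 ^ m.
Proof.
elim: m e => [|m IH] e //=; rewrite (size_cons_pairs _ (c := d.-1 ^ m)) //.
by rewrite -cardE card_step expnS.
Qed.

Lemma size_wf P m : size (wf P m) = #|P| * d.-1 ^ m.
Proof. by rewrite /wf (size_cons_pairs _ (c := d.-1 ^ m)) ?cardE // => x; exact: size_ext. Qed.

Lemma cgeod_split x p i : cgeod (x :: p) ->
  path step x (take i p) /\ path step (last x (take i p)) (rcons (drop i p) x).
Proof.
rewrite cgeodE -{1}(cat_take_drop i p) rcons_cat cat_path; by case/andP.
Qed.

Lemma path_nbw a R x : path step a (rcons R x) -> nbw (tgt a) R /\ wend (tgt a) R = src x.
Proof.
case: R => [|y R] /=; first by case/andP => /andP[/eqP H _] _.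
case/andP=> /andP[/eqP Hay _]; rewrite rcons_path => /andP[Hp /andP[/eqP Hl _]].
by rewrite Hay eqxx Hp wend_cons Hl.
Qed.

Variable g : nat.
Hypothesis gir : is_girth src inv g.
Hypothesis g3 : 2 < g.

Lemma G1a p q v u : nbw v p -> nbw v q -> wend v p = u -> wend v q = u -> p != q ->
  g <= size p + size q.
Proof.
move=> Hp Hq Hwp Hwq Hne.
have [c [Hc [H1 _]]] := L (ltnSn _) Hp Hq Hwp Hwq Hne.
exact: leq_trans (gir.2 c Hc) H1.
Qed.

Lemma G1b p q v u : nbw v p -> nbw v q -> wend v p = u -> wend v q = u -> p != q ->
  size p + size q <= g -> p != [::] -> cgeod (p ++ rinv q).
Proof.
move=> Hp Hq Hwp Hwq Hne Hs Hn.
have [c [Hc [H1 [H2|[E|H2]]]]] := L (ltnSn _) Hp Hq Hwp Hwq Hne.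
- by have := gir.2 c Hc; lia.
- by rewrite -E.
by rewrite H2 in Hn.
Qed.

Definition Cset := [set t : g.-tuple D | cgeod t].

Lemma card_C_le : #|Cset| <= #|D| * d.-1 ^ (g./2).
Proof.
set h := g./2.
have Hg : odd g + (h + h) = g by rewrite addnn odd_double_half.
have Ho : odd g <= 1 by case: (odd g).
clearbody h; move: (nat_of_bool (odd g)) Hg Ho => og Hg Ho.
have gpos : 0 < g by case: gir => [[s [Hs <-]] _]; case/andP: Hs.
rewrite cardE -(size_map (fun t : g.-tuple D => take h.+1 t)).
have -> : #|D| = #|(predT : pred D)| by apply: eq_card.
rewrite -size_wf; apply: uniq_leq_size.
  rewrite map_inj_in_uniq ?enum_uniq //.
  move=> [s1 Hs1] [s2 Hs2]; rewrite !mem_enum !inE /= => C1 C2 Et; apply: val_inj => /=.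
  move: Hs1 Hs2 C1 C2 Et; case: s1 => [|x1 p1]; first by move=> /eqP /= H; lia.
  case: s2 => [|x2 p2]; first by move=> _ /eqP /= H; lia.
  move=> /eqP /= Hs1 /eqP /= Hs2 C1 C2 [E1 Et]; subst x2.
  have [_ P1] := cgeod_split h C1; have [_ P2] := cgeod_split h C2.
  rewrite Et in P1.
  have [N1 W1] := path_nbw P1; have [N2 W2] := path_nbw P2.
  have [E|Ne] := eqVneq (drop h p1) (drop h p2).
    by rewrite -(cat_take_drop h p1) -(cat_take_drop h p2) Et E.
  have := G1a N1 N2 W1 W2 Ne; rewrite !size_drop; lia.
move=> w /mapP[[s Hs] Hin ->] /=; rewrite mem_enum inE /= in Hin.
move: Hs Hin; case: s => [|x p]; first by move=> /eqP /= H; lia.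
move=> /eqP /= Hs C1; rewrite /= mem_wf /= size_take.
have [P1 _] := cgeod_split h C1; rewrite P1 andbT.
have Hh : (h < size p)%N by clear -g3 Hg Ho Hs; move: (size p) Hs => sp Hs; lia.
by rewrite Hh eqxx.
Qed.

Lemma drop_zip_ (s t : seq D) i : drop i (zip s t) = zip (drop i s) (drop i t).
Proof.
have Z : forall u : seq D, zip u ([::] : seq D) = [::] by case.
elim: s t i => [|x s IH] [|y t] [|i] //=; rewrite ?Z ?IH //; [case: (drop i t) | case: (drop i s)] => //.
Qed.
Lemma take_zip_ (s t : seq D) i : take i (zip s t) = zip (take i s) (take i t).
Proof.
have Z : forall u : seq D, zip u ([::] : seq D) = [::] by case.
by elim: s t i => [|x s IH] [|y t] [|i] //=; rewrite ?Z ?IH.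
Qed.

Lemma zip_rot (s t : seq D) i : size s = size t -> zip (rot i s) (rot i t) = rot i (zip s t).
Proof.
move=> Hs; rewrite /rot zip_cat ?size_drop ?Hs // drop_zip_ take_zip_ //.
Qed.

Lemma all_rot_ (a : pred (D * D)) s i : all a (rot i s) = all a s.
Proof. by rewrite /rot all_cat andbC -all_cat cat_take_drop. Qed.

Lemma cgeod_rot s i : cgeod (rot i s) = cgeod s.
Proof.
rewrite /Defs.cgeod size_rot rot_rot zip_rot ?size_rot // all_rot_ //.
Qed.

Definition Rrot (t t' : g.-tuple D) := [exists i : 'I_g, val t' == rot i (val t)].

Lemma rot_compose (s : seq D) (i j : nat) : size s = g -> i < g -> j < g ->
  exists k : 'I_g, rot j (rot i s) = rot k s.
Proof.
move=> Hs Hi Hj; rewrite rot_add_mod ?Hs; try lia.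
have [H|H|H] := ltngtP (j + i) g.
- by exists (Ordinal H).
- have Hk : j + i - g < g by lia.
  by exists (Ordinal Hk).
- have Hk : 0 < g by lia.
  by exists (Ordinal Hk); rewrite H /= -{1}Hs rot_size rot0.
Qed.

Lemma rot_inverse (s : seq D) (i : nat) : size s = g -> i < g ->
  exists k : 'I_g, s = rot k (rot i s).
Proof.
move=> Hs Hi; have gpos : 0 < g by lia.
case: i Hi => [|i] Hi; first by exists (Ordinal gpos); rewrite /= !rot0.
have Hk : g - i.+1 < g by lia.
exists (Ordinal Hk) => /=; rewrite -rotD; last by rewrite Hs; lia.
rewrite subnK; last by lia. by rewrite -Hs rot_size.
Qed.

Lemma Rrot_equiv : equivalence_rel Rrot.
Proof.
have gpos : 0 < g by lia.
move=> x y z; split.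
  by apply/existsP; exists (Ordinal gpos); rewrite /= rot0.
move=> /existsP[i /eqP Hi]; apply/idP/idP.
  move=> /existsP[j /eqP Hj].
  have [i' Hi'] := rot_inverse (size_tuple x) (ltn_ord i).
  rewrite -Hi in Hi'.
  have [k Hk] := rot_compose (size_tuple y) (ltn_ord i') (ltn_ord j).
  apply/existsP; exists k; apply/eqP; by rewrite -Hk -Hi'.
move=> /existsP[j /eqP Hj].
have [k Hk] := rot_compose (size_tuple x) (ltn_ord i) (ltn_ord j).
by apply/existsP; exists k; rewrite Hj Hi Hk.
Qed.

Lemma prim (u : seq D) m : cgeod u -> size u = g -> 0 < m < g -> rot m u = u -> False.
Proof.
move=> Cu Hs /andP[m0 mg] Hr.
case: u Cu Hs Hr => [|x p] //= Cu Hs Hr.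
case: m m0 mg Hr => [|m] // _ mg Hr.
have Hm : m < size p by lia.
have [P1 P2] := cgeod_split m Cu.
have Hd : drop m p = nth x p m :: drop m.+1 p by rewrite (drop_nth x Hm).
have Hy : nth x p m = x.
  move: Hr; rewrite /rot /= Hd /=; by case.
rewrite Hd Hy /= in P2; case/andP: P2 => St _.
suff : cgeod (x :: take m p) by move/(gir.2 _); rewrite /= size_take Hm; lia.
by rewrite cgeodE rcons_path P1 St.
Qed.

Lemma card_rot_class (t : g.-tuple D) : t \in Cset -> #|rot_class t| = g.
Proof.
rewrite inE => Ct.
have -> : rot_class t = [set [tuple of rot (nat_of_ord i) t] | i : 'I_g].
  apply/setP => t'; rewrite inE; apply/existsP/imsetP.
    by case=> i /eqP Hi; exists i => //; apply: val_inj.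
  by case=> i _ ->; exists i.
rewrite card_imset ?card_ord // => i j /(f_equal val) /= Hij.
wlog lt_ij : i j Hij / i < j.
  move=> W; have [H|H|H] := ltngtP i j; [exact: W | | exact: val_inj].
  by apply/esym/W.
exfalso; apply: (prim (u := rot i t) (m := j - i)).
- by rewrite cgeod_rot.
- by rewrite size_rot size_tuple.
- by apply/andP; split; move: (ltn_ord j); lia.
- rewrite -rotD ?subnK ?Hij // ?size_tuple.
  all: apply: ltnW; by [|exact: ltn_ord].
Qed.

Lemma kiss_g : kiss_at src inv g * g = #|Cset|.
Proof.
have EP : [set rot_class t | t in Cset] = equivalence_partition Rrot Cset.
  apply: eq_in_imset => t Ct; apply/setP => t'; rewrite !inE.
  apply/idP/idP; last by case/andP.
  move=> H; rewrite /Rrot H andbT; case/existsP: H => i /eqP Hi.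
  by rewrite Hi cgeod_rot; rewrite inE in Ct.
rewrite /kiss_at -/Cset EP; symmetry; apply: card_uniform_partition.
  by rewrite -EP => _ /imsetP[t Ct ->]; exact: card_rot_class.
apply: equivalence_partitionP; move=> x y z _ _ _; exact: Rrot_equiv.
Qed.

Fixpoint ballr (P : pred D) k : seq (seq D) :=
  if k is k'.+1 then ballr P k' ++ wf P k' else [::].

Lemma mem_ballr P k s : (s \in ballr P k) =
  if s is f :: s' then [&& P f, size s' < k & path step f s'] else false.
Proof.
elim: k s => [|k IH] s /=; first by case: s => [|f s'] //; rewrite andbF.
rewrite mem_cat IH mem_wf; case: s => [|f s'] //.
rewrite ltnS (leq_eqVlt (size s')); case: (P f) => //=; case: (path step f s'); rewrite ?andbF ?andbT //.
by rewrite orbC.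
Qed.

Lemma uniq_ballr P k : uniq (ballr P k).
Proof.
elim: k => [|k IH] //=; rewrite cat_uniq IH uniq_wf andbT /=.
apply/hasPn => s; rewrite mem_wf mem_ballr; case: s => [|f s'] //.
case/and3P => _ /eqP -> _; rewrite ltnn andbF //.
Qed.

Lemma size_ballr P k : size (ballr P k) = #|P| * \sum_(j < k) d.-1 ^ j.
Proof.
elim: k => [|k IH] /=; first by rewrite big_ord0 muln0.
by rewrite size_cat IH size_wf big_ord_recr /= mulnDr.
Qed.

Definition ball P k := [::] :: ballr P k.

Lemma ball_nbw (P : pred D) (k : nat) (v : V) (s : seq D) : (forall f, P f -> src f == v) -> s \in ball P k ->
  nbw v s /\ size s <= k.
Proof.
move=> HP; rewrite inE mem_ballr; case: s => [|f s'] //= /and3P[Pf Hs Hp].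
by rewrite HP // Hp.
Qed.

Lemma size_ball P k : size (ball P k) = 1 + #|P| * \sum_(j < k) d.-1 ^ j.
Proof. by rewrite /= size_ballr. Qed.

Lemma uniq_ball P k : uniq (ball P k).
Proof. by rewrite /= uniq_ballr andbT mem_ballr. Qed.

Lemma wend_uniq (P : pred D) (k : nat) (v : V) : (forall f, P f -> src f == v) -> k + k < g ->
  uniq (map (wend v) (ball P k)).
Proof.
move=> HP Hk; rewrite map_inj_in_uniq ?uniq_ball // => s1 s2 H1 H2 Hw.
have [N1 S1] := ball_nbw HP H1; have [N2 S2] := ball_nbw HP H2.
apply/eqP; apply: contraT => Hne.
have := G1a N1 N2 Hw erefl Hne; lia.
Qed.

Lemma halves : g./2 + (g - 1)./2 + 1 = g.
Proof.
case: g g3 => [|g'] // _; rewrite subn1 /= uphalf_half.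
have := odd_double_half g'; rewrite -addnn; case: (odd g') => /=; lia.
Qed.

Lemma halves_even : ~~ odd g -> g./2 = (g - 1)./2 + 1.
Proof.
case: g g3 => [|g'] // _; rewrite subn1 /= uphalf_half => /negbNE ->.
by rewrite addnC.
Qed.

Lemma halves_odd : odd g -> g./2 = (g - 1)./2.
Proof.
case: g g3 => [|g'] // _; rewrite subn1 /= uphalf_half => Ho.
by rewrite (negbTE Ho).
Qed.

Lemma complete (w b : seq D) v : nbw v w -> size w = g./2 + 1 -> nbw v b ->
  size b <= (g - 1)./2 -> wend v b = wend v w ->
  exists t, t \in Cset /\ take (g./2).+1 t = w.
Proof.
move=> Nw Sw Nb Sb Wb.
have Hh := halves.
have Hle : (g - 1)./2 <= g./2.
  case: (boolP (odd g)) => [/halves_odd | /halves_even] ->; lia.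
have Hne : w != b by apply/eqP => E; rewrite E in Sw; lia.
have := G1a Nw Nb erefl Wb Hne => Hg.
have Hc := G1b Nw Nb erefl Wb Hne.
have Hsz : size (w ++ rinv b) == g by rewrite size_cat /rinv size_rev size_map; apply/eqP; lia.
exists (Tuple Hsz); split.
  rewrite inE /=; apply: Hc; first by lia.
  by apply/eqP => E; rewrite E in Sw; move: Sw; rewrite addn1.
by rewrite /= take_size_cat // Sw addn1.
Qed.

Lemma surj_gen :
  (forall (x : D) (u : V), exists b, size b <= (g - 1)./2 /\
    ((nbw (src x) b /\ wend (src x) b = u) \/
     (~~ odd g /\ nbw (tgt x) b /\ wend (tgt x) b = u))) ->
  #|D| * d.-1 ^ (g./2) <= #|Cset|.
Proof.
move=> Hcov.
have -> : #|D| = #|(predT : pred D)| by apply: eq_card.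
rewrite -size_wf cardE -(size_map (fun t : g.-tuple D => take (g./2).+1 t)).
apply: uniq_leq_size; first exact: uniq_wf.
move=> w; rewrite mem_wf; case: w => [|x P'] // /and3P[_ /eqP SP Hp].
have Nw : nbw (src x) (x :: P') by rewrite /= eqxx.
have [b [Sb [[Nb Wb]|[Ev [Nb Wb]]]]] := Hcov x (wend (src x) (x :: P')).
  have Sw : size (x :: P') = g./2 + 1 by rewrite /= SP addn1.
  have [t [Ct Ht]] := complete Nw Sw Nb Sb Wb.
  by apply/mapP; exists t; rewrite ?mem_enum.
exfalso.
have Np : nbw (tgt x) P' := nbw_cons Nw.
have Hne : P' != b by apply/eqP => E; rewrite -E SP halves_even // in Sb; lia.
have := G1a Np Nb erefl Wb Hne; rewrite SP.
have := halves; rewrite halves_even //; lia.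
Qed.

Lemma sum_shift k : 1 + d.-1 * \sum_(j < k) d.-1 ^ j = \sum_(j < k.+1) d.-1 ^ j.
Proof.
rewrite big_ord_recl expn0 big_distrr /=; congr (_ + _); apply: eq_bigr => i _.
by rewrite expnS.
Qed.

Lemma ball_E (x : D) : exists E : seq V, [/\ uniq E, size E = moore_count d g &
  forall u, u \in E -> exists b, size b <= (g - 1)./2 /\
    ((nbw (src x) b /\ wend (src x) b = u) \/
     (~~ odd g /\ nbw (tgt x) b /\ wend (tgt x) b = u))].
Proof.
set k := (g - 1)./2.
have Hh := halves.
case: (boolP (odd g)) => Ho.
  have Hk : k + k < g by move: Hh; rewrite halves_odd //; lia.
  have HP : forall f, [pred f | src f == src x] f -> src f == src x by [].
  exists (map (wend (src x)) (ball [pred f | src f == src x] k)); split.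
  - exact: wend_uniq.
  - rewrite size_map size_ball /moore_count Ho [d - 1]subn1 -/k; congr (_ + _ * _).
    by rewrite -(reg (src x)); apply: eq_card => f; rewrite inE.
  move=> u /mapP[b Hb ->]; have [Nb Sb] := ball_nbw HP Hb.
  by exists b; split => //; left.
have Hk : k + k + 1 < g by move: Hh; rewrite halves_even //; lia.
have HPa : forall f, step (inv x) f -> src f == src x.
  by move=> f /andP[/eqP <- _]; rewrite tgt_inv.
have HPb : forall f, step x f -> src f == tgt x.
  by move=> f /andP[/eqP <- _].
exists (map (wend (src x)) (ball (step (inv x)) k) ++ map (wend (tgt x)) (ball (step x) k)).
split.
- have Hk' : k + k < g by lia.
  rewrite cat_uniq (wend_uniq HPa Hk') (wend_uniq HPb Hk') andbT andTb.
  apply/hasPn => u /mapP[b Hb ->]; apply/negP => /mapP[a Ha Hab].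
  have [Na Sa] := ball_nbw HPa Ha; have [Nb Sb] := ball_nbw HPb Hb.
  have Np : nbw (src x) (x :: b).
    move: Hb; rewrite inE mem_ballr; case: b {Sb Nb Hab} => [|f b]; first by rewrite /= eqxx.
    by move=> /= /and3P[Hf _ Hp]; rewrite eqxx Hf Hp.
  have Hne : x :: b != a.
    move: Ha; rewrite inE mem_ballr; case: a {Sa Na Hab} => [|f a] //= /and3P[/andP[_ Hf] _ _].
    rewrite invK in Hf; apply/eqP; case => E _; by rewrite E eqxx in Hf.
  have := G1a Np Na erefl (esym Hab) Hne; rewrite /=; lia.
- rewrite size_cat !size_map !size_ball !card_step /moore_count (negbTE Ho) [d - 1]subn1.
  rewrite sum_shift halves_even // addn1 -/k; lia.
move=> u; rewrite mem_cat => /orP[] /mapP[b Hb ->].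
  have [Nb Sb] := ball_nbw HPa Hb; by exists b; split => //; left.
have [Nb Sb] := ball_nbw HPb Hb; by exists b; split => //; right.
Qed.

Lemma card_D : #|D| = #|V| * d.
Proof.
rewrite -sum1_card (partition_big src predT) //= -sum_nat_const.
apply: eq_bigr => v _; rewrite -(reg v) -sum1_card; apply: eq_bigl => e.
by rewrite inE.
Qed.

Lemma comb_main : (exists x : D, True) ->
  [/\ kiss_at src inv g * g <= #|V| * d * d.-1 ^ (g./2),
      moore_count d g <= #|V| &
      (#|V| = moore_count d g -> kiss_at src inv g * g = #|V| * d * d.-1 ^ (g./2))].
Proof.
move=> [x0 _]; rewrite kiss_g -card_D; split.
- exact: card_C_le.
- have [E [UE SE _]] := ball_E x0; rewrite -SE cardE.
  by apply: uniq_leq_size => // u _; rewrite mem_enum.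
move=> Hn; apply/eqP; rewrite eqn_leq card_C_le /=; apply: surj_gen => x u.
have [E [UE SE HE]] := ball_E x; apply: HE.
have Hsub : {subset E <= enum V} by move=> u' _; rewrite mem_enum.
have Hsz : size (enum V) <= size E by rewrite -cardE Hn SE.
have [_ HEq] := uniq_min_size UE Hsub Hsz.
by rewrite HEq mem_enum.
Qed.

End W.

Lemma geom (a K : nat) : 1 <= a -> (a - 1) * \sum_(j < K) a ^ j + 1 = a ^ K.
Proof.
move=> Ha; elim: K => [|K IH]; first by rewrite big_ord0 muln0.
rewrite big_ord_recr /= mulnDr addnAC IH expnS.
move: (a ^ K) => P; nia.
Qed.

Lemma moore_odd d g : 3 <= d -> odd g ->
  moore_count d g * (d - 2) + 2 = d * (d - 1) ^ ((g - 1)./2).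
Proof.
rewrite /moore_count => Hd ->.
have := @geom (d - 1) ((g - 1)./2) ltac:(lia).
have -> : d - 1 - 1 = d - 2 by lia.
move: (\sum_(j < _) _) ((d - 1) ^ _) => S P; nia.
Qed.

Lemma moore_even d g : 3 <= d -> ~~ odd g ->
  moore_count d g * (d - 2) + 2 = 2 * (d - 1) ^ (g./2).
Proof.
rewrite /moore_count => Hd /negbTE ->.
have := @geom (d - 1) (g./2) ltac:(lia).
have -> : d - 1 - 1 = d - 2 by lia.
move: (\sum_(j < _) _) ((d - 1) ^ _) => S P; nia.
Qed.

Lemma INR_add a b : INR (a + b) = (INR a + INR b)%Re.
Proof. exact: plus_INR. Qed.
Lemma INR_mul a b : INR (a * b) = (INR a * INR b)%Re.
Proof. exact: mult_INR. Qed.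
Lemma INR_exp a k : INR (a ^ k) = (INR a ^ k)%Re.
Proof. elim: k => [|k IH] //; by rewrite expnS INR_mul IH. Qed.
Lemma INR_sub a b : b <= a -> INR (a - b) = (INR a - INR b)%Re.
Proof. move=> H; apply: minus_INR; exact/leP. Qed.
Lemma INR_le a b : a <= b -> (INR a <= INR b)%Re.
Proof. move=> H; apply: le_INR; exact/leP. Qed.

Theorem corollary1p2 (V D : finType) (src : D -> V) (inv : D -> D) (d g n : nat) :
  is_graph src inv -> 3 <= d -> connected src inv -> regular src d ->
  is_girth src inv g -> 3 <= g -> #|V| = n ->
  (odd g ->
     Rle (INR (kiss_at src inv g)) (bound_odd n d) /\
     ((INR (kiss_at src inv g) = bound_odd n d)%Re <-> is_moore src inv)) /\
  (~~ odd g ->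
     Rle (INR (kiss_at src inv g)) (bound_even n d) /\
     ((INR (kiss_at src inv g) = bound_even n d)%Re <-> is_moore src inv)).
Proof.
move=> [invK invN] Hd conn reg gir Hg Hn.
have g3 : 2 < g by lia.
have [x0 _] : exists x : D, True.
  by case: gir => [[[|x s] [/andP[H _] _]] _] //; exists x.
have [Hle HM HMeq] := comb_main invK invN reg gir g3 (ex_intro _ x0 I).
rewrite Hn in Hle HM HMeq.
have Hmoore : is_moore src inv <-> n = moore_count d g.
  split.
  - move=> [d' [g' [_ reg' gir' Hn']]].
    have Ed : d' = d by rewrite -(reg' (src x0)) reg.
    have Eg : g' = g.
      case: gir => [[s [Cs Ss]] Hg1]; case: gir' => [[s' [Cs' Ss']] Hg2].
      apply/eqP; rewrite eqn_leq; apply/andP; split.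
        by rewrite -Ss; exact: Hg2.
      by rewrite -Ss'; exact: Hg1.
    by rewrite -Hn Hn' Ed Eg.
  - move=> E; exists d, g; split => //; by rewrite Hn.
have Hd1 : (3 <= INR d)%Re by have := INR_le Hd; rewrite /= => H; lra.
have HnM : (INR (moore_count d g) <= INR n)%Re by exact: INR_le.
have HK0 : (0 <= INR (kiss_at src inv g))%Re by exact: pos_INR.
have Hn0 : (0 < INR n)%Re.
  apply: lt_0_INR; apply/ltP; apply: leq_trans HM.
  rewrite /moore_count; case: (odd g) => //.
  have : 0 < g./2 by rewrite half_gt0; lia.
  case: (g./2) => // m _; rewrite big_ord_recl expn0.
  move: (\sum_(i < m) _) => S; lia.
have INd1 : INR (d - 1) = (INR d - 1)%Re by rewrite INR_sub //; lia.
have INd2 : INR (d - 2) = (INR d - 2)%Re by rewrite INR_sub //; lia.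
have Hiff : forall (P : Prop), (P <-> INR n = INR (moore_count d g)) -> (P <-> is_moore src inv).
  move=> P HP; rewrite HP Hmoore; split; [exact: INR_eq | by move=> ->].
set k := (g - 1)./2.
split => Ho.
- have Hh := halves g3; have Hok := halves_odd g3 Ho.
  have Mid := moore_odd Hd Ho; rewrite -/k in Mid.
  have HkR : INR (k + k + 1) = (2 * INR k + 1)%Re by rewrite !INR_add /=; lra.
  have Hg' : g = k + k + 1 by lia.
  have HgR : INR g = (2 * INR k + 1)%Re by rewrite Hg' HkR.
  have I2 : INR 2 = 2%Re by simpl; lra.
  have S1 : (INR (moore_count d g) * (INR d - 2) + 2)%Re = (INR d * (INR d - 1) ^ k)%Re.
    have := f_equal INR Mid; rewrite INR_add !INR_mul INR_exp INd1 INd2 I2; lra.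
  have S2 : (INR (kiss_at src inv g) * (2 * INR k + 1) <= INR n * INR d * (INR d - 1) ^ k)%Re.
    have := INR_le Hle; rewrite Hok -/k !INR_mul INR_exp HgR -subn1 INd1; lra.
  have S3 : INR n = INR (moore_count d g) ->
      (INR (kiss_at src inv g) * (2 * INR k + 1))%Re = (INR n * INR d * (INR d - 1) ^ k)%Re.
    move=> /INR_eq E; have := f_equal INR (HMeq E).
    rewrite Hok -/k !INR_mul INR_exp HgR -subn1 INd1; lra.
  have [A B] := @real_odd (INR n) (INR d) (INR (kiss_at src inv g)) (INR (moore_count d g)) k
    Hd1 ltac:(apply/leP; lia) Hn0 HK0 HnM S1 S2 S3.
  by split; [exact: A | apply: Hiff; exact: B].
- have Hh := halves g3; have Hok := halves_even g3 Ho.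
  have Mid := moore_even Hd Ho; rewrite Hok -/k in Mid.
  have HkR : INR (k + 1 + (k + 1)) = (2 * INR (k + 1))%Re by rewrite !INR_add /=; lra.
  have Hg' : g = k + 1 + (k + 1) by lia.
  have HgR : INR g = (2 * INR (k + 1))%Re by rewrite Hg' HkR.
  have I2 : INR 2 = 2%Re by simpl; lra.
  have S1 : (INR (moore_count d g) * (INR d - 2) + 2)%Re = (2 * (INR d - 1) ^ (k + 1))%Re.
    have := f_equal INR Mid; rewrite INR_add !INR_mul INR_exp INd1 INd2 I2; lra.
  have S2 : (INR (kiss_at src inv g) * (2 * INR (k + 1)) <= INR n * INR d * (INR d - 1) ^ (k + 1))%Re.
    have := INR_le Hle; rewrite Hok -/k !INR_mul INR_exp HgR -subn1 INd1; lra.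
  have S3 : INR n = INR (moore_count d g) ->
      (INR (kiss_at src inv g) * (2 * INR (k + 1)))%Re = (INR n * INR d * (INR d - 1) ^ (k + 1))%Re.
    move=> /INR_eq E; have := f_equal INR (HMeq E).
    rewrite Hok -/k !INR_mul INR_exp HgR -subn1 INd1; lra.
  have [A B] := @real_even (INR n) (INR d) (INR (kiss_at src inv g)) (INR (moore_count d g)) (k + 1)
    Hd1 ltac:(apply/leP; lia) Hn0 HK0 HnM S1 S2 S3.
  by split; [exact: A | apply: Hiff; exact: B].
Qed.
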